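(* Consider a market in which every hospital's utility is proportional to total wage, i.e. for each $h\in H$ there is $\gamma_h>0$ with $f_h(Y)=\gamma_h w_h(Y)$ for all $Y\subseteq X_h$. For each $h$, let $\mathrm{Ch}_h$ be the choice function that, given $X'\subseteq X_h$ (with $\mathrm{Ch}_h(\emptyset)=\emptyset$), sorts $X'$ in non-decreasing order of wage (ties broken by a fixed order) as $x^{(1)},\dots,x^{(|X'|)}$, sets $Y=\{x^{(|X'|)}\}$, for $i=1,\dots,|X'|-1$ adds $x^{(i)}$ to $Y$ if $w_h(Y\cup\{x^{(i)}\})<1.5\,B_h$, and returns $Y$. Then the generalized deferred acceptance mechanism with these choice functions produces a $B'_H$-stable matching for some $B'_H$ with $B_h\le B'_h\le1.5\,B_h$ for every $h\in H$.
   Context: A market consists of a finite set of doctors $D$, a finite set of hospitals $H$, a finite set of contracts $X\subseteq D\times H\times\mathbb{R}_{>0}$ (contract $x=(d,h,w)$ has doctor $x_D=d$, hospital $x_H=h$, wage $x_W=w$), strict preferences $\succ_d$ of each doctor $d$ over $X_d\cup\{\emptyset\}$, utilities $f_h$ of each hospital on subsets of $X_h$, and budgets $B_h>0$ with $0<x_W\le B_h$ for all $x\in X_h$. For $Y\subseteq X$: $Y_d=\{x\in Y:x_D=d\}$, $Y_h=\{x\in Y:x_H=h\}$, $w_h(Y)=\sum_{x\in Y_h}x_W$. A matching is $Y\subseteq X$ with $|Y_d|\le1$ for all $d$. Given $B'_H=(B'_h)_h$, a matching $Y$ is $B'_H$-feasible if $w_h(Y)\le B'_h$ for all $h$; a matching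 $Z\subseteq X_h$ blocks $Y$ if every doctor $x_D$ with $x\in Z\setminus Y$ strictly prefers $x$ to her contract in $Y$ (or to $\emptyset$), $f_h(Z)>f_h(Y_h)$ and $w_h(Z)\le B'_h$; $Y$ is $B'_H$-stable if it is $B'_H$-feasible and not blocked by any $h$ and $Z\subseteq X_h$. Generalized deferred acceptance with hospital choice functions $\mathrm{Ch}_h$: let $\mathrm{Ch}_H(Y)=\bigcup_h\mathrm{Ch}_h(Y_h)$; $\mathrm{Ch}_d(Y)=\{x\}$ for the $\succ_d$-best $x\in Y_d$ if $x\succ_d\emptyset$, else $\emptyset$; $\mathrm{Ch}_D(Y)=\bigcup_d\mathrm{Ch}_d(Y_d)$. Set $R^{(0)}=\emptyset$; for $i=1,2,\dots$: $Y^{(i)}=\mathrm{Ch}_D(X\setminus R^{(i-1)})$, $Z^{(i)}=\mathrm{Ch}_H(Y^{(i)})$, $R^{(i)}=R^{(i-1)}\cup(Y^{(i)}\setminus Z^{(i)})$; if $Y^{(i)}=Z^{(i)}$, output $Y^{(i)}$. *)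

(* Defs.v *)
From HB Require Import structures.
From mathcomp Require Import all_boot all_order all_algebra.
Set Implicit Arguments. Unset Strict Implicit. Unset Printing Implicit Defensive.
Import Order.TTheory GRing.Theory Num.Theory.
Local Open Scope ring_scope.

Section Market.
Variables (R : realFieldType) (D H X : finType).
Variables (xD : X -> D) (xH : X -> H) (xW : X -> R).
(* strict preferences of doctor d over X_d ∪ {∅} (None = ∅) as an injective
   rank: higher rank = more preferred *)
Variable rk : D -> option X -> nat.
Variable f : H -> {set X} -> R.
Variables (B : H -> R) (tb : X -> nat).

Definition restrH (h : H) (Y : {set X}) : {set X} := [set x in Y | xH x == h].
Definition wsum (h : H) (Y : {set X}) : R := \sum_(x in Y | xH x == h) xW x.

Definition is_matching (Y : {set X}) : Prop :=
  forall d : D, (#|[set x in Y | xD x == d]| <= 1)%N.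

Definition prefers_to_current (x : X) (Y : {set X}) : Prop :=
  let d := xD x in
  (forall y, y \in Y -> xD y = d -> (rk d (Some y) < rk d (Some x))%N) /\
  ((forall y, y \in Y -> xD y <> d) -> (rk d None < rk d (Some x))%N).

Definition feasible (B' : H -> R) (Y : {set X}) : Prop :=
  is_matching Y /\ forall h, wsum h Y <= B' h.

Definition blocks (B' : H -> R) (Y : {set X}) (h : H) (Z : {set X}) : Prop :=
  [/\ (forall x, x \in Z -> xH x = h),
      is_matching Z,
      (forall x, x \in Z -> x \notin Y -> prefers_to_current x Y),
      f h (restrH h Y) < f h Z &
      wsum h Z <= B' h].

Definition stable (B' : H -> R) (Y : {set X}) : Prop :=
  feasible B' Y /\ forall h Z, ~ blocks B' Y h Z.

Definition chD (Y : {set X}) : {set X} :=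
  [set x in Y | (rk (xD x) None < rk (xD x) (Some x))%N &&
     [forall y in Y, (xD y == xD x) ==> (rk (xD x) (Some y) <= rk (xD x) (Some x))%N]].

Definition wage_le (x y : X) : bool :=
  (xW x < xW y) || ((xW x == xW y) && (tb x <= tb y)%N).

(* Ch_h of the theorem: start with the largest element x^(|X'|), then add
   x^(1), ..., x^(|X'|-1) in order whenever the total wage stays < 1.5 B_h *)
Definition ch_h (h : H) (S : {set X}) : {set X} :=
  match sort wage_le (enum S) with
  | [::] => set0
  | x1 :: s =>
      foldl (fun Y x => if wsum h (x |: Y) < (3 / 2) * B h then x |: Y else Y)
            [set last x1 s] (belast x1 s)
  end.

Definition chH (Y : {set X}) : {set X} := \bigcup_(h : H) ch_h h (restrH h Y).

Definition da_step (Rj : {set X}) : {set X} :=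
  let Y := chD (~: Rj) in Rj :|: (Y :\: chH Y).
Definition da_R (n : nat) : {set X} := iter n da_step set0.
(* Y^(n+1) and Z^(n+1) *)
Definition da_Y (n : nat) : {set X} := chD (~: da_R n).
Definition da_Z (n : nat) : {set X} := chH (da_Y n).

End Market.

(* Main.v *)
Require Import Defs.
From HB Require Import structures.
From mathcomp Require Import all_boot all_order all_algebra.
From mathcomp Require Import lra.
Set Implicit Arguments. Unset Strict Implicit. Unset Printing Implicit Defensive.
Import Order.TTheory GRing.Theory Num.Theory.
Local Open Scope ring_scope.

Section P.
Variables (R : realFieldType) (D H X : finType) (xD : X -> D) (xH : X -> H) (xW : X -> R)
  (rk : D -> option X -> nat) (B : H -> R) (tb : X -> nat).
Hypothesis tb_inj : injective tb.
Hypothesis wpos : forall x, 0 < xW x.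

Local Notation le := (wage_le xW tb).
Definition lt x y := (x != y) && le x y.

Lemma le_W x y : le x y -> xW x <= xW y.
Proof. by rewrite /wage_le => /orP [/ltW|/andP [/eqP -> _]]. Qed.

Lemma le_refl x : le x x.
Proof. by rewrite /wage_le eqxx leqnn orbT. Qed.

Lemma le_total x y : le x y || le y x.
Proof.
rewrite /wage_le; case: (ltgtP (xW x) (xW y)) => //= e.
by rewrite /= leq_total.
Qed.

Lemma le_tr y x z : le x y -> le y z -> le x z.
Proof.
rewrite /wage_le.
case: (ltgtP (xW x) (xW y)) => //= xy; case: (ltgtP (xW y) (xW z)) => //= yz.
- by rewrite (lt_trans xy yz).
- by rewrite -yz xy.
- by rewrite xy yz.
- rewrite xy yz eqxx ltxx /= => a b; exact: leq_trans a b.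
Qed.

Lemma le_anti x y : le x y -> le y x -> x = y.
Proof.
rewrite /wage_le; case: (ltgtP (xW x) (xW y)) => //= xy.
move=> a b; apply: tb_inj; apply/eqP; by rewrite eqn_leq a b.
Qed.

Lemma lt_le x y : lt x y -> le x y.
Proof. by case/andP. Qed.

Lemma lt_nle x y : lt x y -> ~~ le y x.
Proof.
case/andP => ne a; apply/negP => b; by rewrite (le_anti a b) eqxx in ne.
Qed.

Lemma lt_le_tr x y z : lt x y -> le y z -> lt x z.
Proof.
move=> a b; rewrite /lt (le_tr (lt_le a) b) andbT; apply/eqP => exz.
by move: (lt_nle a); rewrite exz b.
Qed.

Lemma le_lt_tr x y z : le x y -> lt y z -> lt x z.
Proof.
move=> a b; rewrite /lt (le_tr a (lt_le b)) andbT; apply/eqP => exz.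
by move: (lt_nle b); rewrite -exz a.
Qed.

Lemma lt_irr x : lt x x = false.
Proof. by rewrite /lt eqxx. Qed.

Definition g h x := if xH x == h then xW x else 0.
Lemma g_ge0 h x : 0 <= g h x.
Proof. rewrite /g; case: ifP => _ //; exact: ltW. Qed.

Lemma wsumE h A : wsum xH xW h A = \sum_(x in A) g h x.
Proof. by rewrite /wsum big_mkcondr. Qed.

Lemma wsum_ge0 h A : 0 <= wsum xH xW h A.
Proof. rewrite wsumE; apply: sumr_ge0 => i _; exact: g_ge0. Qed.

Lemma wsum_sub h (A C : {set X}) : A \subset C -> wsum xH xW h A <= wsum xH xW h C.
Proof.
move=> sAC; rewrite !wsumE [X in _ <= X](big_setID A) /= (setIidPr sAC) lerDl.
apply: sumr_ge0 => i _; exact: g_ge0.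
Qed.

Lemma wsum_U h (A C : {set X}) : wsum xH xW h (A :|: C) <= wsum xH xW h A + wsum xH xW h C.
Proof.
rewrite !wsumE (big_setID A) /= (setIidPr (subsetUl A C)).
rewrite lerD2l -!wsumE; apply: wsum_sub.
apply/subsetP => x; rewrite !inE; case: (x \in A) => //.
Qed.

Lemma wsum_U1 h x (A : {set X}) : x \notin A -> xH x = h ->
  wsum xH xW h (x |: A) = xW x + wsum xH xW h A.
Proof. by move=> nA hx; rewrite !wsumE big_setU1 //= /g hx eqxx. Qed.

Lemma wsum1 h x : wsum xH xW h [set x] <= xW x.
Proof.
rewrite wsumE big_set1 /g; case: ifP => _ //; exact: ltW.
Qed.

Lemma wsum_restr h Y : wsum xH xW h (restrH xH h Y) = wsum xH xW h Y.
Proof. by rewrite /wsum; apply: eq_bigl => x; rewrite !inE -andbA andbb. Qed.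


Lemma wsum1E h m : xH m = h -> wsum xH xW h [set m] = xW m.
Proof. by move=> hm; rewrite wsumE big_set1 /g hm eqxx. Qed.

Hypothesis Bpos : forall h, 0 < B h.
Hypothesis wB : forall x, xW x <= B (xH x).

Definition stp h (Y : {set X}) (x : X) : {set X} :=
  if wsum xH xW h (x |: Y) < (3 / 2) * B h then x |: Y else Y.

Lemma stp_sub h (Y : {set X}) (x : X) : Y \subset stp h Y x /\ stp h Y x \subset x |: Y.
Proof. rewrite /stp; case: ifP => _; split => //; exact: subsetUr. Qed.

Lemma F1 h l (A : {set X}) :
  A \subset foldl (stp h) A l /\
  (forall x, x \in foldl (stp h) A l -> (x \in A) || (x \in l)).
Proof.
elim: l A => [|a l IH] A /=; first by split => // x ->.
have [s1 s2] := stp_sub h A a.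
have [IH1 IH2] := IH (stp h A a).
split; first exact: subset_trans s1 IH1.
move=> x /IH2 /orP [xs|xl]; last by rewrite inE xl !orbT.
move/subsetP: s2 => /(_ x xs); rewrite !inE; case/orP => [->|->] //.
by rewrite orbT.
Qed.

Lemma F2 h l (A : {set X}) : wsum xH xW h A < (3 / 2) * B h ->
  wsum xH xW h (foldl (stp h) A l) < (3 / 2) * B h.
Proof.
elim: l A => [|a l IH] A //= hA; apply: IH; rewrite /stp; case: ifP => //.
Qed.

Lemma F3 h l (A : {set X}) : pairwise lt l -> forall x, x \in l ->
  x \notin foldl (stp h) A l ->
  (3 / 2) * B h <= wsum xH xW h (x |: [set y in foldl (stp h) A l | (y \in A) || lt y x]).
Proof.
elim: l A => [|a l IH] A //= /andP [alla pl] x.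
have [F11 F12] := F1 h l (stp h A a).
move=> xal; case xl: (x \in l).
  move=> xG; apply: le_trans (IH _ pl x xl xG) _; apply: wsum_sub.
  apply/subsetP => y; rewrite !inE; case/orP => [->//|/andP [yG]].
  rewrite yG /=; case/orP => [ys|->]; last by rewrite !orbT.
  have [_ /subsetP s2] := stp_sub h A a.
  move: (s2 y ys); rewrite !inE; case/orP => [/eqP ->|->]; last by rewrite !orbT.
  by move/allP: alla => /(_ x xl) ->; rewrite !orbT.
move: xal; rewrite inE xl orbF => /eqP -> aG.
have hA : ~~ (wsum xH xW h (a |: A) < (3 / 2) * B h).
  apply/negP => hlt.
  have : a \in stp h A a by rewrite /stp hlt !inE eqxx.
  by move/(subsetP F11) => aG'; rewrite aG' in aG.
rewrite -leNgt in hA; apply: (le_trans hA); apply: wsum_sub.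
apply/subsetP => y; rewrite !inE; case/orP => [->//|yA].
apply/orP; right; rewrite yA andbT; apply: (subsetP F11).
by rewrite /stp ltNge hA.
Qed.

Lemma wsum_set1_lt h m : wsum xH xW h [set m] < (3 / 2) * B h.
Proof.
rewrite wsumE big_set1 /g; case: eqP => [<-|_].
  have := wB m; have := Bpos (xH m); lra.
have := Bpos h; lra.
Qed.

Lemma sort_facts (S : {set X}) :
  (forall x, (x \in sort le (enum S)) = (x \in S)) /\ pairwise lt (sort le (enum S)).
Proof.
split; first by move=> x; rewrite mem_sort mem_enum.
have u : uniq (sort le (enum S)) by rewrite sort_uniq enum_uniq.
have so : sorted le (sort le (enum S)) by apply: sort_sorted; exact: le_total.
rewrite (sorted_pairwise le_tr) in so.
rewrite uniq_pairwise in u.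
have : pairwise [rel x y | (x != y) && le x y] (sort le (enum S)).
  by rewrite pairwise_relI u so.
by [].
Qed.

Lemma ch_sub h (S : {set X}) : ch_h xH xW B tb h S \subset S.
Proof.
have [mem _] := sort_facts S.
rewrite /ch_h; case E: (sort le (enum S)) mem => [|x1 s] mem; first exact: sub0set.
have [_ F12] := F1 h (belast x1 s) [set last x1 s].
apply/subsetP => x /F12; rewrite -mem (lastI x1 s) mem_rcons in_cons in_set1.
by case/orP => [->|->] //; rewrite orbT.
Qed.

Lemma ch_lt h (S : {set X}) : wsum xH xW h (ch_h xH xW B tb h S) < (3 / 2) * B h.
Proof.
rewrite /ch_h; case: (sort le (enum S)) => [|x1 s].
  by rewrite wsumE big_set0; have := Bpos h; lra.
exact: F2 (wsum_set1_lt _ _).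
Qed.

Lemma ch_max h (S : {set X}) x0 : x0 \in S -> exists M,
  [/\ M \in ch_h xH xW B tb h S, (forall c, c \in S -> le c M) &
      forall x, x \in S -> x \notin ch_h xH xW B tb h S ->
        lt x M /\ (3 / 2) * B h <= xW x + xW M +
           wsum xH xW h [set c in ch_h xH xW B tb h S | lt c x]].
Proof.
move=> x0S.
have [mem pl] := sort_facts S.
rewrite /ch_h; case E: (sort le (enum S)) mem pl => [|x1 s] mem pl.
  by move: (mem x0); rewrite x0S.
rewrite lastI pairwise_rcons in pl; case/andP: pl => allM pl.
have memS x : x \in S = (x == last x1 s) || (x \in belast x1 s).
  by rewrite -mem (lastI x1 s) mem_rcons in_cons.
set M := last x1 s; set l := belast x1 s.
set G := foldl _ _ _.
have GE : G = foldl (stp h) [set M] l by [].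
have [F11 _] := F1 h l [set M].
rewrite -GE in F11.
have MG : M \in G by apply: (subsetP F11); rewrite inE.
exists M; split => //.
  move=> c; rewrite memS; case/orP => [/eqP ->|cl]; first exact: le_refl.
  by apply: lt_le; move/allP: allM => /(_ c cl).
move=> x; rewrite memS; case/orP => [/eqP ->|xl]; first by rewrite MG.
move=> xG; split; first by move/allP: allM => /(_ x xl).
have := @F3 h l [set M] pl x xl; rewrite -GE => /(_ xG) hF.
apply: le_trans hF _.
apply: le_trans (wsum_U _ _ _) _.
have h1 := wsum1 h x.
have h2 : wsum xH xW h [set y in G | (y \in [set M]) || lt y x] <=
          xW M + wsum xH xW h [set c in G | lt c x].
  apply: le_trans (_ : wsum xH xW h ([set M] :|: [set c in G | lt c x]) <= _).
    apply: wsum_sub; apply/subsetP => y; rewrite !inE.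
    by case/andP => ->; case/orP => ->; rewrite ?orbT.
  apply: le_trans (wsum_U _ _ _) _; rewrite lerD2r; exact: wsum1.
lra.
Qed.


Hypothesis rk_inj : forall d : D, {in [pred o : option X | if o is Some x then xD x == d else true] &,
                   injective (rk d)}.

Local Notation Yd n := (da_Y xD xH xW rk B tb n).
Local Notation Zd n := (da_Z xD xH xW rk B tb n).
Local Notation Rd n := (da_R xD xH xW rk B tb n).
Local Notation chD := (chD xD rk).
Local Notation chH := (chH xH xW B tb).
Local Notation ch := (ch_h xH xW B tb).
Local Notation ws := (wsum xH xW).

Lemma daR_S n : Rd n.+1 = Rd n :|: (Yd n :\: Zd n).
Proof. by []. Qed.

Lemma chDP (A : {set X}) x : reflect [/\ x \in A, (rk (xD x) None < rk (xD x) (Some x))%N &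
   forall y, y \in A -> xD y = xD x -> (rk (xD x) (Some y) <= rk (xD x) (Some x))%N]
   (x \in chD A).
Proof.
rewrite inE; apply: (iffP idP).
  case/andP => xA /andP [a /forall_inP f]; split => // y yA e.
  by have := f y yA; rewrite e eqxx.
case => xA a f; rewrite xA a /=; apply/forall_inP => y yA; apply/implyP => /eqP e.
exact: f.
Qed.

Lemma chH_sub (Y : {set X}) : chH Y \subset Y.
Proof.
apply/bigcupsP => h _; apply: subset_trans (ch_sub h _) _.
by apply/subsetP => x; rewrite inE => /andP [].
Qed.

Lemma chH_h (Y : {set X}) h x : x \in chH Y -> xH x = h -> x \in ch h (restrH xH h Y).
Proof.
case/bigcupP => h' _ xc hx.
have := subsetP (ch_sub h' _) x xc; rewrite inE => /andP [_ /eqP e].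
have eh : h' = h by rewrite -e hx.
by rewrite -eh.
Qed.

Lemma chH_in (Y : {set X}) h x : x \in ch h (restrH xH h Y) -> x \in chH Y.
Proof. by move=> xc; apply/bigcupP; exists h. Qed.

Lemma R_mono n : Rd n \subset Rd n.+1.
Proof. rewrite daR_S; exact: subsetUl. Qed.

Lemma Z_Y n : Zd n \subset Yd n.+1.
Proof.
apply/subsetP => x xZ.
have xY : x \in Yd n := subsetP (chH_sub _) x xZ.
case/chDP: xY => xR acc f.
apply/chDP; split => //.
  by rewrite daR_S !inE xZ /= ?orbF; rewrite inE in xR.
move=> y yR e; apply: f => //.
move: yR; rewrite !in_setC => yR; apply: contra yR; exact: (subsetP (R_mono n) y).
Qed.

Lemma rejected n y : y \in Rd n -> exists2 i, (i < n)%N & (y \in Yd i) && (y \notin Zd i).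
Proof.
elim: n => [|n IH]; first by rewrite /da_R /= inE.
rewrite daR_S inE => /orP [/IH [i lt1 hi]|].
  by exists i => //; apply: ltn_trans lt1 _.
rewrite inE andbC => hy; by exists n.
Qed.

Lemma prefers_R n z : z \notin Yd n -> prefers_to_current xD rk z (Yd n) -> z \in Rd n.
Proof.
move=> zY [P1 P2]; apply/negPn/negP => zR.
case: (boolP [exists c, (c \in Yd n) && (xD c == xD z)]).
  case/existsP => c /andP [cY /eqP e].
  have lt1 := P1 c cY e.
  case/chDP: cY => _ _ f.
  have zR' : z \in ~: Rd n by rewrite inE.
  have := f z zR' (esym e); rewrite e => le1.
  by have := leq_trans lt1 le1; rewrite ltnn.
move/existsPn => nex.
have acc : (rk (xD z) None < rk (xD z) (Some z))%N.
  apply: P2 => y yY e; by move: (nex y); rewrite yY e eqxx.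
have Pz : (z \in ~: Rd n) && (xD z == xD z) by rewrite inE zR eqxx.
case: (@arg_maxnP X z (fun c => (c \in ~: Rd n) && (xD c == xD z)) (fun c => rk (xD z) (Some c)) Pz) => c /andP [cR /eqP ec] cmax.
have cY : c \in Yd n.
  apply/chDP; split => //; rewrite ec.
    apply: leq_trans acc _; apply: cmax; by rewrite inE zR eqxx.
  move=> y yR e; apply: cmax; by rewrite yR e eqxx.
by move: (nex c); rewrite cY ec eqxx.
Qed.

Lemma chD_match (A : {set X}) : is_matching xD (chD A).
Proof.
move=> d; apply/card_le1_eqP => x y /setIdP [xc /eqP ex] /setIdP [yc /eqP ey].
case/chDP: (xc) => xA _ fx; case/chDP: (yc) => yA _ fy.
have a := fx y yA (etrans ey (esym ex)).
have b := fy x xA (etrans ex (esym ey)).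
rewrite ex in a; rewrite ey in b.
have e : rk d (Some y) = rk d (Some x) by apply/eqP; rewrite eqn_leq a b.
have := @rk_inj d (Some y) (Some x); rewrite /in_mem /= ey ex eqxx => /(_ isT isT e).
by case.
Qed.


Definition Inv h y (C : {set X}) := exists2 m, m \in C &
  lt y m /\ (3 / 2) * B h <= ws h [set c in C | lt c y] + xW m + xW y.

Lemma Inv_mono h y (C C' : {set X}) : C \subset C' -> Inv h y C -> Inv h y C'.
Proof.
move=> sC [m mC [lym hb]]; exists m; first exact: (subsetP sC).
split => //; apply: (le_trans hb); rewrite lerD2r lerD2r; apply: wsum_sub.
apply/subsetP => c; rewrite !inE => /andP [cC ->]; by rewrite (subsetP sC c cC).
Qed.

Lemma Inv_pres h y (C S : {set X}) : C \subset S -> Inv h y C -> Inv h y (ch h S).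
Proof.
move=> sC [m0 m0C [lym hb]].
have m0S := subsetP sC m0 m0C.
have [M [MG Mmax Mrej]] := ch_max h m0S.
exists M => //; split; first exact: lt_le_tr lym (Mmax m0 m0S).
case: (boolP [exists r, [&& r \in S, r \notin ch h S & lt r y]]).
  case/existsP => r /and3P [rS rG lry].
  have [_ hr] := Mrej r rS rG.
  have h1 := le_W (lt_le lry).
  have h2 : ws h [set c in ch h S | lt c r] <= ws h [set c in ch h S | lt c y].
    apply: wsum_sub; apply/subsetP => c; rewrite !inE => /andP [-> lcr] /=.
    exact: lt_le_tr lcr (lt_le lry).
  lra.
move/existsPn => nr.
have h1 := le_W (Mmax m0 m0S).
have h2 : ws h [set c in C | lt c y] <= ws h [set c in ch h S | lt c y].
  apply: wsum_sub; apply/subsetP => c; rewrite !inE => /andP [cC lcy].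
  rewrite lcy andbT; move: (nr c); rewrite (subsetP sC c cC) lcy /= andbT.
  by move/negbNE.
lra.
Qed.

Lemma Inv_init h y (S : {set X}) : y \in S -> y \notin ch h S -> Inv h y (ch h S).
Proof.
move=> yS yG; have [M [MG _ Mrej]] := ch_max h yS.
have [lyM hb] := Mrej y yS yG.
exists M => //; split => //; lra.
Qed.

Lemma C_sub h j : ch h (restrH xH h (Yd j)) \subset restrH xH h (Yd j.+1).
Proof.
apply/subsetP => x xc.
have := subsetP (ch_sub h _) x xc; rewrite inE => /andP [_ hx].
rewrite inE hx andbT; apply: (subsetP (Z_Y j)); exact: chH_in xc.
Qed.

Lemma Inv_iter h y i k : Inv h y (ch h (restrH xH h (Yd i))) ->
   Inv h y (ch h (restrH xH h (Yd (i + k)))).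
Proof.
move=> hi; elim: k => [|k IH]; first by rewrite addn0.
rewrite addnS; exact: Inv_pres (C_sub h (i + k)) IH.
Qed.

Lemma keyK h n z : z \in Rd n -> xH z = h ->
  exists m, [/\ m \in restrH xH h (Yd n), lt z m & (3 / 2) * B h <= ws h (Yd n) + xW z].
Proof.
move=> zR hz; have [i lin /andP [zY zZ]] := rejected zR.
have zS : z \in restrH xH h (Yd i) by rewrite inE zY hz eqxx.
have zG : z \notin ch h (restrH xH h (Yd i)).
  by apply: contra zZ => zc; exact: chH_in zc.
have := Inv_iter (n - i) (Inv_init zS zG); rewrite subnKC; last exact: ltnW.
move/(Inv_mono (ch_sub h _)) => [m mY [lzm hb]].
exists m; split => //.
have mn : m \notin [set c in restrH xH h (Yd n) | lt c z].
  rewrite inE negb_and; apply/orP; right; apply/negP => /lt_le.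
  by apply/negP; exact: lt_nle lzm.
have hm : xH m = h by move: mY; rewrite inE => /andP [_ /eqP].
have : ws h (m |: [set c in restrH xH h (Yd n) | lt c z]) <= ws h (Yd n).
  rewrite -[ws h (Yd n)]wsum_restr; apply: wsum_sub; apply/subsetP => c.
  by case/setU1P => [->|/setIdP [] //].
rewrite wsum_U1 //; lra.
Qed.


Lemma in_restr h (A : {set X}) x : (x \in restrH xH h A) = (x \in A) && (xH x == h).
Proof. by rewrite inE. Qed.

Lemma card_R n : (forall j, (j < n)%N -> Yd j != Zd j) -> (n <= #|Rd n|)%N.
Proof.
elim: n => [|n IH] hj //.
have IH' := IH (fun j lj => hj j (ltnW lj)).
apply: leq_ltn_trans IH' _; apply: proper_card; apply/properP; split; first exact: R_mono.
have : ~~ (Yd n \subset Zd n).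
  apply/negP => sYZ; move: (hj n (ltnSn n)); rewrite eqEsubset sYZ (chH_sub _).
  by [].
case/subsetPn => x xY xZ; exists x.
  by rewrite daR_S in_setU in_setD xZ xY /= orbT.
by case/chDP: xY; rewrite inE.
Qed.

Lemma main (f : H -> {set X} -> R) (gamma : H -> R) :
  (forall h, 0 < gamma h) ->
  (forall h (Y : {set X}), (forall x, x \in Y -> xH x = h) -> f h Y = gamma h * ws h Y) ->
  exists n : nat,
    [/\ Yd n = Zd n, (forall m, (m < n)%N -> Yd m <> Zd m) &
        exists B' : H -> R,
          (forall h, B h <= B' h <= (3 / 2) * B h) /\
          stable xD xH xW rk f B' (Yd n)].
Proof.
move=> gpos fE.
have ex : exists n, Yd n == Zd n.
  case: (boolP [exists j : 'I_#|X|.+1, Yd j == Zd j]).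
    by case/existsP => j hj; exists j.
  move/existsPn => nj.
  have := @card_R #|X|.+1 (fun j lj => nj (Ordinal lj)).
  by rewrite ltnNge max_card.
case: (ex_minnP ex) => n /eqP eqn nmin.
exists n; split => //.
  move=> m lmn e; have := nmin m; rewrite e eqxx => /(_ isT); by rewrite leqNgt lmn.
set Y := Yd n.
have Wlt h : ws h Y < (3 / 2) * B h.
  apply: le_lt_trans (ch_lt h (restrH xH h Y)).
  rewrite -wsum_restr; apply: wsum_sub; apply/subsetP => x.
  rewrite inE => /andP [xY /eqP hx]; apply: chH_h hx.
  by have : x \in Zd n by rewrite -eqn.
exists (fun h => Num.max (B h) (ws h Y)); split.
  move=> h; rewrite le_max lexx /= ge_max; apply/andP; split; last exact: ltW.
  have := Bpos h; lra.
split.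
  split; first exact: chD_match.
  by move=> h; rewrite le_max lexx orbT.
move=> h Z [Zh Zm Zpref flt wZ].
have rh : forall x, x \in restrH xH h Y -> xH x = h.
  by move=> x; rewrite inE => /andP [_ /eqP].
rewrite (fE h _ rh) (fE h _ Zh) ltr_pM2l // wsum_restr in flt.
have WZB : ws h Z <= B h.
  move: wZ; rewrite le_max => /orP [//|hw]; lra.
have K z : z \in Z -> z \notin Y ->
    exists m, [/\ m \in restrH xH h Y, lt z m & (3 / 2) * B h <= ws h Y + xW z].
  move=> zZ zY; exact: keyK (prefers_R zY (Zpref z zZ zY)) (Zh z zZ).
have big z : z \in Z -> z \notin Y -> B h < 2 * xW z.
  move=> zZ zY; have [m [_ _ hb]] := K z zZ zY; lra.
case: (boolP [exists z, (z \in Z) && (z \notin Y)]); last first.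
  move/existsPn => nz.
  have : Z \subset restrH xH h Y.
    apply/subsetP => z zZ; rewrite inE (Zh z zZ) eqxx andbT.
    by move: (nz z); rewrite zZ /= negbK.
  move/(wsum_sub h); rewrite wsum_restr => hh.
  by have := lt_le_trans flt hh; rewrite ltxx.
case/existsP => y /andP [yZ yY].
have [m [mY lym hb]] := K y yZ yY.
have hm : xH m = h by apply: rh.
have hy : xH y = h := Zh y yZ.
have wym : xW y <= xW m := le_W (lt_le lym).
have mY' : m \in Y by move: mY; rewrite inE => /andP [].
have ym : y != m by apply/eqP => e; rewrite e mY' in yY.
have by2 := big y yZ yY.
case mZ: (m \in Z).
  have : ws h (y |: [set m]) <= ws h Z.
    apply: wsum_sub; apply/subsetP => c /setU1P [->//|]; by rewrite inE => /eqP ->.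
  rewrite wsum_U1 ?wsum1E ?inE //; lra.
have sub : Z \subset y |: (restrH xH h Y :\ m).
  apply/subsetP => z zZ; case zY: (z \in Y).
    apply/setU1P; right; rewrite in_setD1 in_restr zY (Zh z zZ) eqxx !andbT.
    by apply/eqP => e; rewrite -e zZ in mZ.
  case: (eqVneq z y) => [->|zy]; first by rewrite setU11.
  have zY' : z \notin Y by rewrite zY.
  have bz := big z zZ zY'.
  have : ws h (z |: [set y]) <= ws h Z.
    apply: wsum_sub; apply/subsetP => c /setU1P [->//|]; by rewrite inE => /eqP ->.
  rewrite wsum_U1 ?wsum1E ?inE ?(Zh z zZ) //; lra.
have h1 := wsum_sub h sub.
rewrite wsum_U1 // in h1; last by rewrite in_setD1 in_restr negb_and (negbTE yY) /= orbT.
have h2 : ws h Y = xW m + ws h (restrH xH h Y :\ m).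
  by rewrite -wsum_restr -{1}(setD1K mY) wsum_U1 // in_setD1 eqxx.
have : ws h Z <= ws h Y by rewrite h2; apply: (le_trans h1); rewrite lerD2r.
by move=> hh; have := lt_le_trans flt hh; rewrite ltxx.
Qed.

End P.

Theorem theorem7 (R : realFieldType) (D H X : finType)
    (xD : X -> D) (xH : X -> H) (xW : X -> R)
    (rk : D -> option X -> nat) (f : H -> {set X} -> R)
    (B : H -> R) (gamma : H -> R) (tb : X -> nat) :
  (* X ⊆ D × H × R: a contract is determined by its triple *)
  injective (fun x => (xD x, xH x, xW x)) ->
  (* strict preferences of each doctor on X_d ∪ {∅} *)
  (forall d : D, {in [pred o : option X | if o is Some x then xD x == d else true] &,
                   injective (rk d)}) ->
  (forall h, 0 < B h) ->
  (forall x, 0 < xW x /\ xW x <= B (xH x)) ->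
  (* utilities proportional to total wage *)
  (forall h, 0 < gamma h) ->
  (forall h (Y : {set X}), (forall x, x \in Y -> xH x = h) ->
     f h Y = gamma h * wsum xH xW h Y) ->
  (* fixed tie-breaking order *)
  injective tb ->
  exists n : nat,
    [/\ da_Y xD xH xW rk B tb n = da_Z xD xH xW rk B tb n,
        (forall m, (m < n)%N -> da_Y xD xH xW rk B tb m <> da_Z xD xH xW rk B tb m) &
        exists B' : H -> R,
          (forall h, B h <= B' h <= (3 / 2) * B h) /\
          stable xD xH xW rk f B' (da_Y xD xH xW rk B tb n)].
Proof.
move=> _ rkinj Bpos wp gpos fE tbinj.
exact: (main tbinj (fun x => proj1 (wp x)) Bpos (fun x => proj2 (wp x)) rkinj gpos fE).
Qed.
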